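(* Let $\{\mathscr E_1,\dots,\mathscr E_{\mathfrak n},\Delta\}$, $\mathfrak n\ge2$, be a partition of $E$ not depending on $N$, and $\alpha_N,\theta_N$ positive sequences with $\alpha_N/\theta_N\to0$, such that (H1) and (H2) hold with $(a_N,b_N)=(\alpha_N,\theta_N)$. Then for every $x$ such that $\mathscr E_x$ is not a singleton and all $\eta\neq\xi\in\mathscr E_x$, $$\lim_{N\to\infty}\frac{\mathrm{Cap}_N(\mathscr E_x,\breve{\mathscr E}_x)}{\mathrm{Cap}_N(\eta,\xi)}=0,\qquad \breve{\mathscr E}_x=\bigcup_{y\ne x}\mathscr E_y.$$
   Context: Setting: $E$ is a fixed finite set. For each $N\ge1$, $(\eta^N_t)_{t\ge0}$ is a continuous-time irreducible Markov chain on $E$ with jump rates $R_N(\eta,\xi)$, holding rates $\lambda_N(\eta)=\sum_{\xi\neq\eta}R_N(\eta,\xi)$ and unique invariant probability measure $\mu_N$; $\mathbb P_\eta$ denotes the law started at $\eta$. For $A\subset E$, $H_A=\inf\{t>0:\eta^N_t\in A\}$, $H^+_A=\inf\{t>\tau_1:\eta^N_t\in A\}$, $\tau_1$ the first jump time. For disjoint nonempty $A,B$, $\mathrm{Cap}_N(A,B)=\sum_{\eta\in A}\mu_N(\eta)\lambda_N(\eta)\mathbb P_\eta[H_B<H^+_A]$, $\mathrm{Cap}_N(\eta,\xi)=\mathrm{Cap}_N(\{\eta\},\{\xi\})$. For nonempty $F\subset E$ the trace on $F$ is $\eta^F_t=\eta^N_{S_F(t)}$, $S_F(t)=\sup\{s:\int_0^s\mathbf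 1\{\eta^N_r\in F\}dr\le t\}$, an irreducible Markov chain on $F$ with jump rates $R^F_N$. Conditions: with $\mathscr E=\bigcup_x\mathscr E_x$ and $r^{\mathscr E}_N(\mathscr E_x,\mathscr E_y)=\mu_N(\mathscr E_x)^{-1}\sum_{\eta\in\mathscr E_x}\mu_N(\eta)\sum_{\xi\in\mathscr E_y}R^{\mathscr E}_N(\eta,\xi)$, (H1) for all $x\neq y$, $r_{\mathscr E}(x,y):=\lim_N b_Nr^{\mathscr E}_N(\mathscr E_x,\mathscr E_y)$ exists in $[0,\infty)$ and $\sum_x\sum_{y\ne x}r_{\mathscr E}(x,y)>0$; (H2) for each $x$ with $|\mathscr E_x|\ge2$ and $\eta\ne\xi\in\mathscr E_x$, $\liminf_N a_N\mathrm{Cap}_N(\eta,\xi)/\mu_N(\mathscr E_x)>0$. *)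

(* Defs.v *)
From Stdlib Require Import Reals Relations ClassicalEpsilon.
From mathcomp Require Import all_boot.
Set Implicit Arguments. Unset Strict Implicit. Unset Printing Implicit Defensive.
Local Open Scope R_scope.

Section MC.
Variable E : finType.

Definition rsum (A : {set E}) (f : E -> R) : R := \big[Rplus/0]_(x in A) f x.

Definition hold_rate (Rt : E -> E -> R) (x : E) : R :=
  \big[Rplus/0]_(y | y != x) Rt x y.

Definition jump_prob (Rt : E -> E -> R) (x y : E) : R :=
  if y == x then 0 else Rt x y / hold_rate Rt x.

(* probability, starting at z (time 0 counts), that the jump chain enters T
   before S within k jumps *)
Fixpoint hit_before (Rt : E -> E -> R) (T S : {set E}) (k : nat) (z : E) : R :=
  match k with
  | O => 0
  | k'.+1 => if z \in T then 1 else if z \in S then 0 else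
       \big[Rplus/0]_w (jump_prob Rt z w * hit_before Rt T S k' w)
  end.

Definition seq_lim (u : nat -> R) : R := epsilon (inhabits 0) (fun l => Un_cv u l).

(* P_x[ chain hits T (after the first jump) before it hits S (after the first jump) ] *)
Definition escape (Rt : E -> E -> R) (T S : {set E}) (x : E) : R :=
  seq_lim (fun k => \big[Rplus/0]_w (jump_prob Rt x w * hit_before Rt T S k w)).

Definition cap (Rt : E -> E -> R) (mu : E -> R) (A B : {set E}) : R :=
  rsum A (fun x => mu x * hold_rate Rt x * escape Rt B A x).

(* jump rates of the trace chain on F: R^F(x,y) = lambda(x) P_x[H^+_F = H^+_y] *)
Definition trace_rate (Rt : E -> E -> R) (F : {set E}) (x y : E) : R :=
  hold_rate Rt x * escape Rt [set y] (F :\ y) x.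

Definition mean_trace_rate (Rt : E -> E -> R) (mu : E -> R) (F A B : {set E}) : R :=
  / rsum A mu * rsum A (fun x => mu x * rsum B (fun y => trace_rate Rt F x y)).

Definition irreducible (Rt : E -> E -> R) : Prop :=
  forall x y : E, clos_refl_trans E (fun u v => u <> v /\ 0 < Rt u v) x y.

Definition invariant_prob (Rt : E -> E -> R) (mu : E -> R) : Prop :=
  (forall x, 0 <= mu x) /\ rsum setT mu = 1 /\
  (forall y, \big[Rplus/0]_(x | x != y) (mu x * Rt x y) = mu y * hold_rate Rt y).

End MC.

(* Main.v *)
Require Import Defs.
From Stdlib Require Import Reals ClassicalEpsilon Lra Psatz.
From HB Require Import structures.
From mathcomp Require Import all_boot.
Local Open Scope R_scope.

HB.instance Definition _ := Monoid.isComLaw.Build R 0 Rplus (fun a b c => esym (Rplus_assoc a b c)) Rplus_comm Rplus_0_l.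
HB.instance Definition _ := Monoid.isComLaw.Build R 1 Rmult (fun a b c => esym (Rmult_assoc a b c)) Rmult_comm Rmult_1_l.
HB.instance Definition _ := Monoid.isMulLaw.Build R 0 Rmult Rmult_0_l Rmult_0_r.
HB.instance Definition _ := Monoid.isAddLaw.Build R Rmult Rplus Rmult_plus_distr_r Rmult_plus_distr_l.

Lemma sum_le (I : Type) (s : seq I) (P : pred I) (f g : I -> R) :
  (forall i, P i -> f i <= g i) ->
  \big[Rplus/0]_(i <- s | P i) f i <= \big[Rplus/0]_(i <- s | P i) g i.
Proof.
move=> H; apply: (big_ind2 (fun a b => a <= b)) => //; first lra.
by move=> ? ? ? ? ? ?; apply: Rplus_le_compat.
Qed.

Lemma sum_ge0 (I : Type) (s : seq I) (P : pred I) (f : I -> R) :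
  (forall i, P i -> 0 <= f i) -> 0 <= \big[Rplus/0]_(i <- s | P i) f i.
Proof.
move=> H; apply: (big_ind (fun a => 0 <= a)) => //; first lra.
by move=> ? ? ? ?; lra.
Qed.

Lemma Un_cv_ext {u v l} : (forall k, u k = v k) -> Un_cv u l -> Un_cv v l.
Proof. move=> H C e He; have [N HN] := C e He; exists N => k Hk; rewrite -H; auto. Qed.

Lemma Un_cv_sum (I : Type) (s : seq I) (P : pred I) (f : I -> nat -> R) (l : I -> R) :
  (forall i, P i -> Un_cv (f i) (l i)) ->
  Un_cv (fun k => \big[Rplus/0]_(i <- s | P i) f i k) (\big[Rplus/0]_(i <- s | P i) l i).
Proof.
move=> H; elim: s => [|a s IH].
  rewrite big_nil; apply: (@Un_cv_ext (fun _ => 0) _ _) => [k|]; first by rewrite big_nil.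
  by move=> e He; exists 0%nat => k _; rewrite /R_dist Rminus_diag Rabs_R0.
rewrite big_cons; case Pa: (P a) => /=.
  apply: (@Un_cv_ext (fun k => f a k + \big[Rplus/0]_(i <- s | P i) f i k) _ _).
    by move=> k; rewrite big_cons Pa.
  by apply: CV_plus => //; apply: H.
apply: (Un_cv_ext _ IH) => k. by rewrite big_cons Pa.
Qed.

Lemma cv_ge0 u l : (forall k, 0 <= u k) -> Un_cv u l -> 0 <= l.
Proof.
move=> H C; apply: Rnot_lt_le => Hl.
have [N HN] := C (- l) ltac:(lra).
have := HN N (le_n N); rewrite /R_dist => /Rabs_def2 [H1 _]. have := H N. lra.
Qed.

Lemma seq_limE u l : Un_cv u l -> seq_lim u = l.
Proof.
move=> C; rewrite /seq_lim; apply: (UL_sequence u) => //.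
by apply: epsilon_spec; exists l.
Qed.

Section Chain.
Variable E : finType.
Variable Rt : E -> E -> R.
Hypothesis Hnn : forall x y, x <> y -> 0 <= Rt x y.

Lemma hold_ge0 z : 0 <= hold_rate Rt z.
Proof. apply: sum_ge0 => y /eqP Hy; apply: Hnn; auto. Qed.

Lemma jp_ge0 z w : 0 <= jump_prob Rt z w.
Proof.
rewrite /jump_prob; case: eqP => [_|/nesym Hw]; first lra.
apply: Rmult_le_pos; first exact: Hnn.
have [H0|H0] := Rle_lt_or_eq_dec _ _ (hold_ge0 z).
  by apply: Rlt_le; apply: Rinv_0_lt_compat.
by rewrite -H0 Rinv_0; lra.
Qed.

Lemma jp_sum z : \big[Rplus/0]_w jump_prob Rt z w <= 1.
Proof.
have -> : \big[Rplus/0]_w jump_prob Rt z w = hold_rate Rt z * / hold_rate Rt z.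
  rewrite /hold_rate big_distrl /= (bigID (fun w => w == z)) /=.
  rewrite big1 ?Rplus_0_l; last by move=> w /eqP ->; rewrite /jump_prob eqxx.
  by apply: eq_bigr => w /negbTE Hw; rewrite /jump_prob Hw.
have [H0|H0] := Rle_lt_or_eq_dec _ _ (hold_ge0 z).
  by rewrite Rinv_r; lra.
by rewrite -H0 Rmult_0_l; lra.
Qed.

Lemma hit_bounds T S k z : 0 <= hit_before Rt T S k z <= 1.
Proof.
elim: k z => [|k IH] z /=; first lra.
case: (z \in T); first lra. case: (z \in S); first lra.
split.
  by apply: sum_ge0 => w _; apply: Rmult_le_pos; [apply: jp_ge0 | case: (IH w)].
apply: Rle_trans (jp_sum z); apply: sum_le => w _.
rewrite -{2}(Rmult_1_r (jump_prob Rt z w)); apply: Rmult_le_compat_l.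
  exact: jp_ge0.
by case: (IH w).
Qed.

Lemma hit_mono T S k z : hit_before Rt T S k z <= hit_before Rt T S k.+1 z.
Proof.
elim: k z => [|k IH] z; first by case: (hit_bounds T S 1 z).
rewrite [hit_before _ _ _ k.+1 _]/= [hit_before _ _ _ k.+2 _]/=.
case: (z \in T); first lra. case: (z \in S); first lra.
apply: sum_le => w _; apply: Rmult_le_compat_l; [exact: jp_ge0 | exact: IH].
Qed.

Lemma esc_cv T S z :
  Un_cv (fun k => \big[Rplus/0]_w (jump_prob Rt z w * hit_before Rt T S k w))
        (escape Rt T S z).
Proof.
set u := fun k => _.
have [l Hl] : {l | Un_cv u l}.
  apply: growing_cv.
    move=> k; rewrite /u; apply: sum_le => w _; apply: Rmult_le_compat_l;
      [exact: jp_ge0 | exact: hit_mono].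
  exists 1 => _ [k ->]; rewrite /u; apply: Rle_trans (jp_sum z); apply: sum_le => w _.
  rewrite -{2}(Rmult_1_r (jump_prob Rt z w)); apply: Rmult_le_compat_l.
    exact: jp_ge0.
  by case: (hit_bounds T S k w).
by rewrite /escape (@seq_limE u l Hl).
Qed.

Lemma esc_ge0 T S z : 0 <= escape Rt T S z.
Proof.
apply: cv_ge0 (esc_cv T S z) => k; apply: sum_ge0 => w _.
by apply: Rmult_le_pos; [apply: jp_ge0 | case: (hit_bounds T S k w)].
Qed.

End Chain.

Section Decomp.
Variable E : finType.
Variable Rt : E -> E -> R.
Variables A B U : {set E}.
Hypothesis HA : forall z, z \in A -> z \in U.
Hypothesis HB : forall z, z \in B -> z \in U.
Hypothesis HU : forall z, z \in U -> (z \in A) || (z \in B).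
Hypothesis HAB : forall z, z \in A -> z \in B -> False.

Lemma hit_decomp k z :
  hit_before Rt B A k z = \big[Rplus/0]_(y in B) hit_before Rt [set y] (U :\ y) k z.
Proof.
elim: k z => [|k IH] z /=; first by rewrite big1.
case: ifP => zB.
  rewrite (bigD1 z) //= in_set1 eqxx big1 ?Rplus_0_r // => y /andP [yB yz].
  rewrite eq_sym in yz; by rewrite in_set1 (negbTE yz) in_setD1 yz HB.
case: ifP => zA.
  rewrite big1 // => y yB.
  have zy : z != y by apply: contraFN zB => /eqP E1; rewrite E1.
  by rewrite in_set1 (negbTE zy) in_setD1 zy HA.
have zU : z \notin U by apply/negP => /HU; rewrite zA zB.
rewrite [RHS](eq_bigr (fun y => \big[Rplus/0]_w (jump_prob Rt z w * hit_before Rt [set y] (U :\ y) k w))); last first.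
  move=> y yB.
  have zy : z != y by apply: contraFN zB => /eqP E1; rewrite E1.
  by rewrite in_set1 (negbTE zy) in_setD1 (negbTE zU) andbF.
rewrite exchange_big /=; apply: eq_bigr => w _.
by rewrite IH big_distrr.
Qed.

Lemma esc_decomp z (Hnn : forall x y, x <> y -> 0 <= Rt x y) :
  escape Rt B A z = \big[Rplus/0]_(y in B) escape Rt [set y] (U :\ y) z.
Proof.
apply: (UL_sequence _ _ _ (@esc_cv _ Rt Hnn B A z)).
have HS := @Un_cv_sum _ (index_enum E) (fun y => y \in B) (fun y k => \big[Rplus/0]_w (jump_prob Rt z w * hit_before Rt [set y] (U :\ y) k w)) (fun y => escape Rt [set y] (U :\ y) z) (fun y _ => @esc_cv _ Rt Hnn _ _ z).
apply: (Un_cv_ext _ HS).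
move=> k /=; rewrite exchange_big /=; apply: eq_bigr => w _.
by rewrite hit_decomp big_distrr.
Qed.
End Decomp.

Lemma key (C K P Q c th S: R) : 0 < K -> 0 < c -> 0 < P -> 0 < Q -> 0 < th -> 0 <= C ->
  c <= Q * K / P -> C = P * (S / th) -> C / K <= Q / th * S / c.
Proof.
move=> HK Hc HP HQ Hth HC H1 H2.
have H3 : c * P <= Q * K.
  have := Rmult_le_compat_r P _ _ (Rlt_le _ _ HP) H1.
  by replace (Q * K / P * P) with (Q * K) by (field; lra).
have E1 : Q / th * S / c = C * (Q * / (c * P)) by rewrite H2; field; lra.
have E2 : / K = Q * / (Q * K) by field; lra.
rewrite E1 /Rdiv; apply: Rmult_le_compat_l => //.
rewrite E2; apply: Rmult_le_compat_l; first lra.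
apply: Rinv_le_contravar => //; nra.
Qed.

Lemma squeeze (v g : nat -> R) (N0 : nat) :
  (forall N, (N0 <= N)%N -> 0 <= v N <= g N) -> Un_cv g 0 -> Un_cv v 0.
Proof.
move=> H C e He; have [N1 HN1] := C e He; exists (maxn N0 N1) => k Hk.
have Hk' : (maxn N0 N1 <= k)%N by apply/leP.
have Hk0 : (N0 <= k)%N by apply: leq_trans (leq_maxl _ _) Hk'.
have Hk1 : (k >= N1)%coq_nat by apply/leP; apply: leq_trans (leq_maxr _ _) Hk'.
have := HN1 k Hk1; have := H k Hk0; rewrite /R_dist !Rminus_0_r => [[h1 h2]].
rewrite !Rabs_right; lra.
Qed.

Lemma cv_const (a : R) : Un_cv (fun _ => a) a.
Proof. by move=> e He; exists 0%nat => k _; rewrite /R_dist Rminus_diag Rabs_R0. Qed.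

Lemma split_B (E : finType) (n : nat) (Ec : 'I_n -> {set E}) (x : 'I_n) (g : E -> R) :
  (forall x y, x <> y -> [disjoint Ec x & Ec y]) ->
  \big[Rplus/0]_(z in \bigcup_(y | y != x) Ec y) g z =
  \big[Rplus/0]_(y | y != x) \big[Rplus/0]_(z in Ec y) g z.
Proof.
move=> Hd.
rewrite big_mkcond /= [RHS](eq_bigr (fun y => \big[Rplus/0]_z (if z \in Ec y then g z else 0))); last first.
  by move=> y _; rewrite big_mkcond.
rewrite exchange_big /=; apply: eq_bigr => z _.
case: ifP => zB.
  have [y0 y0x zy0] := bigcupP zB.
  rewrite (bigD1 y0) //= zy0 big1 ?Rplus_0_r // => y /andP [yx yy0].
  case: ifP => // zy.
  have : y <> y0 by apply/eqP.
  by move/Hd/disjointFr => /(_ z zy); rewrite zy0.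
rewrite big1 // => y yx; case: ifP => // zy.
by move: zB; have -> : z \in \bigcup_(y | y != x) Ec y by apply/bigcupP; exists y.
Qed.
Theorem lemma6p2 (E : finType) (n : nat)
  (Rt : nat -> E -> E -> R) (mu : nat -> E -> R)
  (Ec : 'I_n -> {set E}) (Delta : {set E}) (alpha theta : nat -> R) :
  (2 <= n)%N ->
  (forall N x y, x <> y -> 0 <= Rt N x y) ->
  (forall N, irreducible (Rt N)) ->
  (forall N, invariant_prob (Rt N) (mu N)) ->
  (* {E_1,...,E_n, Delta} is a partition of E *)
  (forall x, Ec x != set0) ->
  (forall x y, x <> y -> [disjoint Ec x & Ec y]) ->
  (forall x, [disjoint Ec x & Delta]) ->
  (forall z : E, z \in Delta \/ exists x, z \in Ec x) ->
  (forall N, 0 < alpha N) -> (forall N, 0 < theta N) ->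
  Un_cv (fun N => alpha N / theta N) 0 ->
  (* (H1) with b_N = theta_N *)
  (exists r : 'I_n -> 'I_n -> R,
     (forall x y, x <> y ->
        Un_cv (fun N => theta N *
                 mean_trace_rate (Rt N) (mu N) (\bigcup_(i : 'I_n) Ec i) (Ec x) (Ec y))
              (r x y)) /\
     0 < \big[Rplus/0]_(x : 'I_n) \big[Rplus/0]_(y : 'I_n | y != x) r x y) ->
  (* (H2) with a_N = alpha_N *)
  (forall x : 'I_n, (1 < #|Ec x|)%N ->
     forall a b, a \in Ec x -> b \in Ec x -> a <> b ->
     exists c, 0 < c /\ exists N0 : nat, forall N : nat, (N0 <= N)%N ->
       c <= alpha N * cap (Rt N) (mu N) [set a] [set b] / rsum (Ec x) (mu N)) ->
  forall x : 'I_n, (1 < #|Ec x|)%N ->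
  forall a b, a \in Ec x -> b \in Ec x -> a <> b ->
  Un_cv (fun N => cap (Rt N) (mu N) (Ec x) (\bigcup_(y : 'I_n | y != x) Ec y)
                  / cap (Rt N) (mu N) [set a] [set b]) 0.
Proof.
move=> Hn Hnn Hirr Hinv Hne Hd HdD Hcov Ha Ht Hat [r [Hr Hrpos]] H2 x Hx a b aE bE ab.
set U := \bigcup_(i : 'I_n) Ec i.
set B := \bigcup_(y : 'I_n | y != x) Ec y.
set A := Ec x.
have [c [Hc [N0 HN0]]] := H2 x Hx a b aE bE ab.
set m := fun N y => mean_trace_rate (Rt N) (mu N) U (Ec y) (Ec y).
pose S := fun N => \big[Rplus/0]_(y | y != x)
   (theta N * mean_trace_rate (Rt N) (mu N) U A (Ec y)).
have HS : Un_cv S (\big[Rplus/0]_(y | y != x) r x y).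
  apply: (@Un_cv_sum _ _ (fun y => y != x) (fun y N => theta N * mean_trace_rate (Rt N) (mu N) U A (Ec y))).
  by move=> y yx; apply: Hr; apply/eqP; rewrite eq_sym.
have HAU : forall z, z \in A -> z \in U by move=> z zA; apply/bigcupP; exists x.
have HBU : forall z, z \in B -> z \in U.
  by move=> z /bigcupP [y _ zy]; apply/bigcupP; exists y.
have HUAB : forall z, z \in U -> (z \in A) || (z \in B).
  move=> z /bigcupP [y _ zy]; case: (eqVneq y x) => [yx|yx].
    by rewrite /A -yx zy.
  by apply/orP; right; apply/bigcupP; exists y.
have HAB : forall z, z \in A -> z \in B -> False.
  move=> z zA /bigcupP [y yx zy].
  have : x <> y by apply/eqP; rewrite eq_sym.
  by move/Hd/disjointFr => /(_ z zA); rewrite zy.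
have Hcap : forall N, rsum A (mu N) <> 0 ->
  cap (Rt N) (mu N) A B = rsum A (mu N) * (S N / theta N).
  move=> N HP.
  have -> : S N / theta N = \big[Rplus/0]_(y | y != x) mean_trace_rate (Rt N) (mu N) U A (Ec y).
    rewrite /S /Rdiv big_distrl /=; apply: eq_bigr => y _; field; have := Ht N; lra.
  rewrite big_distrr /= /cap /rsum.
  rewrite (eq_bigr (fun z => \big[Rplus/0]_(y | y != x) (mu N z * hold_rate (Rt N) z *
       \big[Rplus/0]_(w in Ec y) escape (Rt N) [set w] (U :\ w) z))); last first.
    move=> z _; rewrite (@esc_decomp _ (Rt N) A B U HAU HBU HUAB z (Hnn N)).
    by rewrite split_B // big_distrr.
  rewrite exchange_big /=; apply: eq_bigr => y _.
  rewrite /mean_trace_rate /rsum -Rmult_assoc Rinv_r // Rmult_1_l.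
  apply: eq_bigr => z _; rewrite /trace_rate -big_distrr /=; ring.
have HPpos : forall N, (N0 <= N)%N -> 0 < rsum A (mu N).
  move=> N HN; have := HN0 N HN.
  have HP0 : 0 <= rsum A (mu N).
    by apply: sum_ge0 => z _; case: (Hinv N) => H0 _; apply: H0.
  case: (Rle_lt_or_eq_dec _ _ HP0) => // <-.
  rewrite /Rdiv Rinv_0 Rmult_0_r; lra.
apply: (@squeeze _ (fun N => alpha N / theta N * S N / c) N0).
  move=> N HN; have HP := HPpos N HN.
  have HC : 0 <= cap (Rt N) (mu N) A B.
    apply: sum_ge0 => z _; apply: Rmult_le_pos; last exact: (@esc_ge0 _ _ (Hnn N)).
    apply: Rmult_le_pos; first by case: (Hinv N) => H0 _; apply: H0.
    exact: (@hold_ge0 _ _ (Hnn N)).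
  have HK : 0 < cap (Rt N) (mu N) [set a] [set b].
    have := HN0 N HN; have := Ha N => HaN Hle.
    apply: Rnot_le_lt => Hk.
    have h1 : alpha N * cap (Rt N) (mu N) [set a] [set b] <= 0 by nra.
    have h2 : alpha N * cap (Rt N) (mu N) [set a] [set b] * / rsum A (mu N) <= 0 * / rsum A (mu N).
      by apply: Rmult_le_compat_r => //; apply: Rlt_le; apply: Rinv_0_lt_compat.
    rewrite Rmult_0_l in h2; rewrite /A /Rdiv in HP h2 *; lra.
  split.
    by apply: Rmult_le_pos => //; apply: Rlt_le; apply: Rinv_0_lt_compat.
  apply: (key _ _ _ _ _ _ (S N) HK Hc HP (Ha N) (Ht N) HC (HN0 N HN)).
  by apply: Hcap; lra.
rewrite -(Rmult_0_l (\big[Rplus/0]_(y | y != x) r x y / c)).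
apply: (Un_cv_ext _ (CV_mult _ _ _ _ Hat (CV_mult _ _ _ _ HS (cv_const (/ c))))).
by move=> k /=; rewrite /Rdiv; ring.
Qed.
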